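(* Let $S\subset\mathbb Z_{\ge1}$. Then $\langle S\rangle_{\mathcal C^w}$ is the union of $S+(\mathcal S_\Gamma\cup\{0\})$ and the set of all integers of the form $k+\overline\beta_b-\overline\beta_a+s$ with $k\in S$, $s\in\mathcal S_\Gamma\cup\{0\}$, $1\le a<b\le g$, $k\le\overline\beta_a$ and $k\equiv\beta_a\pmod{e_{a-1}}$.
   Context: Let $\Gamma$ be a singular irreducible plane branch with multiplicity $n$, Puiseux characteristic exponents $\beta_1<\dots<\beta_g$, $e_0=n$, $e_j=\gcd(e_{j-1},\beta_j)$, $n_j=e_{j-1}/e_j$, $\overline\beta_1=\beta_1$, $\overline\beta_j=n_{j-1}\overline\beta_{j-1}-\beta_{j-1}+\beta_j$ ($2\le j\le g$), and semigroup $\mathcal S_\Gamma$ generated by $n,\overline\beta_1,\dots,\overline\beta_g$. A subset $S\subset\mathbb Z_{>0}$ is a $\mathcal C^w$-collection if $S+\mathcal S_\Gamma\subset S$ and for every $1\le l<g$ and $\lambda\in S$ with $\lambda\le\overline\beta_l$ and $\lambda\equiv\beta_l\pmod{e_{l-1}}$ one has $\lambda+\overline\beta_{l+1}-\overline\beta_l\in S$. $\langle S\rangle_{\mathcal C^w}$ is the smallest $\mathcal C^w$-collection containing $S$. *)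

(* Defs.v *)
From mathcomp Require Import all_boot.
Set Implicit Arguments. Unset Strict Implicit. Unset Printing Implicit Defensive.

(* Puiseux data of a plane branch: multiplicity n, genus g and characteristic
   exponents beta 1 < ... < beta g (values of beta outside 1..g are irrelevant). *)

Fixpoint e_ (n : nat) (beta : nat -> nat) (j : nat) : nat :=
  match j with
  | 0 => n
  | j'.+1 => gcdn (e_ n beta j') (beta j'.+1)
  end.

Definition n_ (n : nat) (beta : nat -> nat) (j : nat) : nat :=
  e_ n beta j.-1 %/ e_ n beta j.

(* bbar_0 = n (convention), bbar_1 = beta_1,
   bbar_j = n_{j-1} bbar_{j-1} - beta_{j-1} + beta_j  for j >= 2.
   (The natural-number subtraction is exact: n_{j-1} bbar_{j-1} >= beta_{j-1}.) *)
Fixpoint bbar (n : nat) (beta : nat -> nat) (j : nat) : nat :=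
  match j with
  | 0 => n
  | j'.+1 =>
      match j' with
      | 0 => beta 1
      | _.+1 => (n_ n beta j' * bbar n beta j' + beta j) - beta j'
      end
  end.

Definition char_data (n g : nat) (beta : nat -> nat) : Prop :=
  [/\ 1 <= g,
      n < beta 1,
      (forall j, 1 <= j < g -> beta j < beta j.+1),
      (forall j, 1 <= j <= g -> e_ n beta j < e_ n beta j.-1) &
      e_ n beta g = 1].

Definition in_semigroup (n g : nat) (beta : nat -> nat) (m : nat) : Prop :=
  exists c : nat -> nat, m = \sum_(0 <= j < g.+1) c j * bbar n beta j.

Definition Cw_collection (n g : nat) (beta : nat -> nat) (T : nat -> Prop) : Prop :=
  [/\ (forall x, T x -> 0 < x),
      (forall x s, T x -> in_semigroup n g beta s -> T (x + s)) &
      (forall l lam, 1 <= l < g -> T lam -> lam <= bbar n beta l ->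
         lam = beta l %[mod e_ n beta l.-1] ->
         T (lam + bbar n beta l.+1 - bbar n beta l))].

Definition Cw_gen (n g : nat) (beta : nat -> nat) (S : nat -> Prop) (x : nat) : Prop :=
  forall T : nat -> Prop, Cw_collection n g beta T -> (forall y, S y -> T y) -> T x.

(* Main.v *)
Require Import Defs.
From mathcomp Require Import all_boot zify.
Set Implicit Arguments. Unset Strict Implicit.

Ltac clear_mod := repeat match goal with H : context [modn _ _] |- _ => clear H end.
Ltac slia := clear_mod; lia.

Lemma modD_cong d x y u v : x = y %[mod d] -> u = v %[mod d] -> x + u = y + v %[mod d].
Proof. by move=> H1 H2; rewrite -modnDm H1 H2 modnDm. Qed.

Lemma dvd_mod0 d x : d %| x -> x = 0 %[mod d].
Proof. by move/eqP ->; rewrite mod0n. Qed.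

Lemma mod_dvdm d m x y : d %| m -> x = y %[mod m] -> x = y %[mod d].
Proof. by move=> H E; rewrite -(modn_dvdm x H) E modn_dvdm. Qed.

Lemma e_dvd_le n beta i j : i <= j -> e_ n beta j %| e_ n beta i.
Proof.
move=> /subnK <-; elim: (j - i) => [|m IH] //=.
exact: dvdn_trans (dvdn_gcdl _ _) IH.
Qed.

Lemma e_dvd_beta n beta j : 0 < j -> e_ n beta j %| beta j.
Proof. by case: j => [|m] //= _; exact: dvdn_gcdr. Qed.

Lemma bbarS n beta j : 0 < j ->
  bbar n beta j.+1 = n_ n beta j * bbar n beta j + beta j.+1 - beta j.
Proof. by case: j. Qed.

Lemma bbar1 n beta : bbar n beta 1 = beta 1.
Proof. by []. Qed.

Lemma e_dvd_bbar n beta j : e_ n beta j %| bbar n beta j.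
Proof.
elim: j => [|j IH]; first exact: dvdnn.
case: j IH => [|m] IH; first exact: dvdn_gcdr.
rewrite bbarS //; apply: dvdn_sub; first apply: dvdn_add.
- apply: dvdn_mull; exact: dvdn_trans (e_dvd_le _ _ (leqnSn _)) IH.
- exact: e_dvd_beta.
- exact: dvdn_trans (e_dvd_le _ _ (leqnSn _)) (e_dvd_beta _ _ _).
Qed.

Lemma e_dvd_bbar_le n beta i j : i <= j -> e_ n beta j %| bbar n beta i.
Proof. move=> H; exact: dvdn_trans (e_dvd_le _ _ H) (e_dvd_bbar _ _ _). Qed.

Lemma e_dvd_beta_le n beta i j : 0 < i -> i <= j -> e_ n beta j %| beta i.
Proof. move=> H0 H; exact: dvdn_trans (e_dvd_le _ _ H) (e_dvd_beta _ _ H0). Qed.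

Lemma n_ge2 n g beta l : char_data n g beta -> 1 <= l <= g -> 2 <= n_ n beta l.
Proof.
case=> _ _ _ Hdec _ Hl.
have H := Hdec _ Hl.
have Hd : e_ n beta l %| e_ n beta l.-1 by case: l Hl H => [|m] // _ _; exact: dvdn_gcdl.
have E := divnK Hd. rewrite /n_.
move: E H; set q := _ %/ _; set a := e_ n beta l; set b := e_ n beta l.-1.
move=> E H; nia.
Qed.

Lemma bbar_rec n g beta l : char_data n g beta -> 1 <= l < g ->
  bbar n beta l.+1 + beta l = n_ n beta l * bbar n beta l + beta l.+1.
Proof.
move=> cd Hl; case: (cd) => _ _ Hinc _ _.
have := Hinc _ Hl; rewrite bbarS; last by case/andP: Hl.
lia.
Qed.

Lemma bbar_step n g beta l : char_data n g beta -> 1 <= l < g ->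
  2 * bbar n beta l < bbar n beta l.+1.
Proof.
move=> cd Hl; have := bbar_rec cd Hl.
have Hl' : 1 <= l <= g by lia.
have := n_ge2 cd Hl'. case: (cd) => _ _ Hinc _ _. have := Hinc _ Hl. nia.
Qed.

Lemma bbar_pos n g beta l : char_data n g beta -> 1 <= l <= g -> 0 < bbar n beta l.
Proof.
move=> cd; elim: l => [|l IH] //; case: l IH => [|m] IH Hl.
  by case: cd => _ H _ _ _; rewrite bbar1; lia.
have Hm : 1 <= m.+1 < g by lia.
have Hm' : 1 <= m.+1 <= g by lia.
have := bbar_step cd Hm. lia.
Qed.

Lemma bbar_lt_succ n g beta l : char_data n g beta -> l < g -> bbar n beta l < bbar n beta l.+1.
Proof.
move=> cd Hl; case: l Hl => [|l] Hl.
  by case: cd => _ H _ _ _; rewrite bbar1.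
have H1 : 1 <= l.+1 < g by lia.
have H2 : 1 <= l.+1 <= g by lia.
have := bbar_step cd H1; have := bbar_pos cd H2; lia.
Qed.

Lemma bbar_mono n g beta i j : char_data n g beta -> i <= j -> j <= g -> bbar n beta i <= bbar n beta j.
Proof.
move=> cd Hij; elim: j Hij => [|j IH] Hij Hj.
  by have -> : i = 0 by lia.
case: (ltnP i j.+1) => Hi.
  have Hj1 : i <= j by lia. have Hj2 : j <= g by lia. have Hj3 : j < g by lia.
  have := IH Hj1 Hj2; have := bbar_lt_succ cd Hj3; lia.
by have -> : i = j.+1 by lia.
Qed.

Lemma bbar_strict n g beta i j : char_data n g beta -> i < j -> j <= g -> bbar n beta i < bbar n beta j.
Proof.
move=> cd Hij Hj; have H1 : i <= j.-1 by lia. have H2 : j.-1 <= g by lia.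
have := bbar_mono cd H1 H2; have H3 : j.-1 < g by lia.
have := bbar_lt_succ cd H3; have -> : j.-1.+1 = j by lia. lia.
Qed.

Lemma bbar_gap n g beta a b : char_data n g beta -> 1 <= a < b -> b <= g ->
  bbar n beta a + bbar n beta b.-1 < bbar n beta b.
Proof.
move=> cd Hab Hb; have H1 : 1 <= b.-1 < g by lia.
have := bbar_step cd H1; have -> : b.-1.+1 = b by lia.
have H2 : a <= b.-1 by lia. have H3 : b.-1 <= g by lia.
have := bbar_mono cd H2 H3. lia.
Qed.

Lemma term_le_sum (r : seq nat) (F : nat -> nat) j : j \in r -> F j <= \sum_(i <- r) F i.
Proof.
elim: r => [|x r IH] //; rewrite in_cons big_cons => /orP [/eqP -> | H].
  exact: leq_addr.
exact: leq_trans (IH H) (leq_addl _ _).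
Qed.

Lemma sg_small_dvd n g beta l s : char_data n g beta -> 1 <= l <= g ->
  in_semigroup n g beta s -> s < bbar n beta l -> e_ n beta l.-1 %| s.
Proof.
move=> cd Hl [c ->] Hs; rewrite big_seq; apply: dvdn_sum => j.
rewrite mem_index_iota => /andP [_ Hj].
case: (ltnP j l) => Hjl.
  apply: dvdn_mull; apply: e_dvd_bbar_le; lia.
have Hle : c j * bbar n beta j <= \sum_(0 <= i < g.+1) c i * bbar n beta i.
  by apply: (term_le_sum (fun i => c i * bbar n beta i)); rewrite mem_index_iota.
have Hjg : j <= g by lia.
have := bbar_mono cd Hjl Hjg.
case: (c j) Hle => [|cj] Hle; first by rewrite mul0n dvdn0.
move=> Hm; exfalso; nia.
Qed.

Lemma cong_step n g beta l lam : char_data n g beta -> 1 <= l < g ->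
  lam <= bbar n beta l -> lam = beta l %[mod e_ n beta l.-1] ->
  lam + bbar n beta l.+1 - bbar n beta l <= bbar n beta l.+1 /\
  lam + bbar n beta l.+1 - bbar n beta l = beta l.+1 %[mod e_ n beta l].
Proof.
move=> cd Hl Hlam Hc.
have Hr := bbar_rec cd Hl.
have Hlt : l < g by slia.
have Hs := bbar_lt_succ cd Hlt.
split; first by clear Hc; slia.
set e := e_ n beta l.
have Eq : lam + bbar n beta l.+1 - bbar n beta l + (bbar n beta l + beta l)
   = lam + n_ n beta l * bbar n beta l + beta l.+1.
  set P := n_ n beta l * bbar n beta l in Hr *; slia.
apply/eqP; rewrite -(eqn_modDr (bbar n beta l + beta l)) Eq; apply/eqP.
have h1 : lam = beta l %[mod e].
  apply: mod_dvdm Hc; apply: e_dvd_le; slia.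
have h2 : n_ n beta l * bbar n beta l = 0 %[mod e].
  by apply: dvd_mod0; apply: dvdn_mull; exact: e_dvd_bbar.
have h3 : bbar n beta l = 0 %[mod e] by apply: dvd_mod0; exact: e_dvd_bbar.
transitivity ((beta l + 0 + beta l.+1) %% e).
  exact: modD_cong (modD_cong h1 h2) (erefl _).
transitivity ((beta l.+1 + (0 + beta l)) %% e).
  by rewrite add0n addn0 addnC.
symmetry; exact: modD_cong (erefl _) (modD_cong h3 (erefl _)).
Qed.

Lemma sg_add n g beta s s' : in_semigroup n g beta s -> in_semigroup n g beta s' ->
  in_semigroup n g beta (s + s').
Proof.
move=> [c ->] [c' ->]; exists (fun j => c j + c' j).
rewrite -big_split; apply: eq_bigr => i _; by rewrite mulnDl.
Qed.

Lemma sg0_add n g beta s s' : in_semigroup n g beta s \/ s = 0 -> in_semigroup n g beta s' ->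
  in_semigroup n g beta (s + s').
Proof. by case=> [H|->] H'; [exact: sg_add | rewrite add0n]. Qed.

Lemma chain n g beta T k a : char_data n g beta -> Cw_collection n g beta T -> T k ->
  1 <= a -> k <= bbar n beta a -> k = beta a %[mod e_ n beta a.-1] ->
  forall b, a < b -> b <= g ->
  [/\ T (k + bbar n beta b - bbar n beta a),
      k + bbar n beta b - bbar n beta a <= bbar n beta b &
      k + bbar n beta b - bbar n beta a = beta b %[mod e_ n beta b.-1]].
Proof.
move=> cd [_ _ HT] Tk Ha Hk Hc; elim=> [|b IH] // Hab Hb.
have Hbg : b < g by slia.
case: (ltnP a b) => Hab'.
  have Hb' : b <= g by slia.
  case: (IH Hab' Hb') => T1 L1 C1.
  have Hl : 1 <= b < g by slia.
  have Ham := bbar_mono cd (ltnW Hab') Hb'.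
  have Hbs := bbar_lt_succ cd Hbg.
  have -> : k + bbar n beta b.+1 - bbar n beta a =
    (k + bbar n beta b - bbar n beta a) + bbar n beta b.+1 - bbar n beta b by clear -Hk Ham Hbs; slia.
  have [L2 C2] := cong_step cd Hl L1 C1.
  split => //. exact: HT.
have Eab : b = a by slia.
subst b.
have Hl : 1 <= a < g by slia.
have [L2 C2] := cong_step cd Hl Hk Hc.
split => //. exact: HT.
Qed.

Definition U_ n g beta (S : nat -> Prop) (x : nat) : Prop :=
    ((exists k s, [/\ S k, in_semigroup n g beta s \/ s = 0 & x = k + s]) \/
     (exists k s a b,
        [/\ S k, in_semigroup n g beta s \/ s = 0,
            1 <= a < b /\ b <= g,
            k <= bbar n beta a /\ k = beta a %[mod e_ n beta a.-1] &
            x = k + bbar n beta b - bbar n beta a + s])).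

Lemma U_coll n g beta S : char_data n g beta -> (forall x, S x -> 0 < x) ->
  Cw_collection n g beta (U_ n g beta S).
Proof.
move=> cd HS; split.
- move=> x [[k [s [Sk _ ->]]] | [k [s [a [b [Sk _ [Hab Hb] _ ->]]]]]];
    have := HS k Sk; first slia.
  have Hab' : a <= b by slia.
  have := bbar_mono cd Hab' Hb; slia.
- move=> x s' [[k [s [Sk Hs ->]]] | [k [s [a [b [Sk Hs Hab Hk ->]]]]]] Hs'.
    left; exists k, (s + s'); split => //; [left; exact: sg0_add | by rewrite addnA].
  right; exists k, (s + s'), a, b; split => //; [left; exact: sg0_add | by rewrite addnA].
- move=> l lam Hl [[k [s [Sk Hs ->]]] | [k [s [a [b [Sk Hs [Hab Hb] [Hk Hkc] ->]]]]]] Hlam Hc.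
  + have Hk0 := HS k Sk.
    have hs : s = 0 %[mod e_ n beta l.-1].
      case: Hs => [Hs|->] //; apply: dvd_mod0; apply: (sg_small_dvd cd) => //; slia.
    have hk : k = beta l %[mod e_ n beta l.-1].
      by rewrite -Hc -[k in LHS]addn0; apply: modD_cong.
    right; exists k, s, l, l.+1; split => //.
    * by split; slia.
    * by split => //; slia.
    * have Hlt : l < g by slia.
      have := bbar_lt_succ cd Hlt; slia.
  + have Hk0 := HS k Sk.
    have Hab' : a <= b by slia.
    have Hm := bbar_mono cd Hab' Hb.
    have Hgap := bbar_gap cd Hab Hb.
    case: (ltngtP l b) => Hlb.
    * exfalso; have H1 : l <= b.-1 by slia. have H2 : b.-1 <= g by slia.
      have := bbar_mono cd H1 H2; slia.
    * exfalso.
      set e := e_ n beta l.-1 in Hc.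
      have Eq : k + bbar n beta b - bbar n beta a + s + bbar n beta a =
                k + bbar n beta b + s by slia.
      have hs : s = 0 %[mod e].
        case: Hs => [Hs|->] //; apply: dvd_mod0; apply: (sg_small_dvd cd) => //; slia.
      have ha : bbar n beta a = 0 %[mod e] by apply: dvd_mod0; apply: e_dvd_bbar_le; slia.
      have hb : bbar n beta b = 0 %[mod e] by apply: dvd_mod0; apply: e_dvd_bbar_le; slia.
      have hk : k = 0 %[mod e].
        have hk1 : k = beta a %[mod e] by apply: mod_dvdm Hkc; apply: e_dvd_le; slia.
        rewrite hk1; apply: dvd_mod0; apply: e_dvd_beta_le; slia.
      have hbeta : beta l = 0 %[mod e].
        have := modD_cong Hc ha; rewrite Eq addn0 => <-.
        have := modD_cong (modD_cong hk hb) hs. by rewrite !addn0 => ->.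
      case: cd => _ _ _ Hdec _.
      have Hl1 : 1 <= l <= g by slia.
      have Hd := Hdec l Hl1.
      have He : e_ n beta l = e_ n beta l.-1.
        move: hbeta; rewrite /e; case: (l) Hl => [|l'] // _ hbeta /=.
        apply/gcdn_idPl; by rewrite /dvdn hbeta mod0n.
      by move: Hd; rewrite He ltnn.
    * subst l.
      right; exists k, s, a, b.+1; split => //.
      - by split; slia.
      - have Hlt : b < g by slia.
        have := bbar_lt_succ cd Hlt; slia.
Qed.

Theorem mainTheorem7 (n g : nat) (beta : nat -> nat) (S : nat -> Prop) :
  char_data n g beta ->
  (forall x, S x -> 0 < x) ->
  forall x : nat,
    Cw_gen n g beta S x <->
    ((exists k s, [/\ S k, in_semigroup n g beta s \/ s = 0 & x = k + s]) \/
     (exists k s a b,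
        [/\ S k, in_semigroup n g beta s \/ s = 0,
            1 <= a < b /\ b <= g,
            k <= bbar n beta a /\ k = beta a %[mod e_ n beta a.-1] &
            x = k + bbar n beta b - bbar n beta a + s])).
Proof.
move=> cd HS x; split.
  move=> H; apply: (H (U_ n g beta S)); first exact: U_coll.
  by move=> y Sy; left; exists y, 0; split => //; [right | rewrite addn0].
move=> HU T HT HST; have HT' := HT; case: HT' => _ Hadd _.
have addsg : forall y s, T y -> in_semigroup n g beta s \/ s = 0 -> T (y + s).
  by move=> y s Ty [Hs|->]; [exact: Hadd | rewrite addn0].
case: HU => [[k [s [Sk Hs ->]]] | [k [s [a [b [Sk Hs [Hab Hb] [Hk Hkc] ->]]]]]].
  exact: addsg (HST _ Sk) Hs.
have Ha : 1 <= a by case/andP: Hab.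
have Hab' : a < b by case/andP: Hab.
case: (chain cd HT (HST _ Sk) Ha Hk Hkc Hab' Hb) => T1 _ _.
exact: addsg T1 Hs.
Qed.
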